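(* Let $G$ be a $K_4$-free graph whose diamonds are mutually edge-disjoint. Then $\theta_e(G)=|E(G)|-2t(G)+d(G)$.
   Context: All graphs are finite and simple. A diamond is a subgraph isomorphic to $K_4$ minus one edge. $t(G)$ is the number of triangles of $G$ and $d(G)$ the number of diamonds of $G$. An edge clique cover of $G$ is a collection of cliques of $G$ such that every edge has both endpoints in some clique of the collection; $\theta_e(G)$ is the minimum size of an edge clique cover of $G$. *)

(* Defs.v *)
(* A finite simple graph = symmetric irreflexive rel on a finType. *)
From HB Require Import structures.
From mathcomp Require Import all_boot all_order all_algebra.
Set Implicit Arguments. Unset Strict Implicit. Unset Printing Implicit Defensive.

Section Graph.
Variables (T : finType) (e : rel T).

Definition is_clique (A : {set T}) : bool :=
  [forall x in A, forall y in A, (x != y) ==> e x y].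

Definition edges : {set {set T}} :=
  [set A : {set T} | (#|A| == 2) && is_clique A].

Definition triangles : {set {set T}} :=
  [set A : {set T} | (#|A| == 3) && is_clique A].
Definition t_num : nat := #|triangles|.

Definition K4_free : bool := [forall A : {set T}, (#|A| == 4) ==> ~~ is_clique A].

(* A diamond (subgraph isomorphic to K4 minus an edge), identified by its
   edge set: 5 edges of G spanning exactly 4 vertices (any 5 of the 6 pairs
   on 4 vertices form K4 - e). *)
Definition is_diamond (F : {set {set T}}) : bool :=
  [&& F \subset edges, #|F| == 5 & #|\bigcup_(f in F) f| == 4].
Definition diamonds : {set {set {set T}}} := [set F | is_diamond F].
Definition d_num : nat := #|diamonds|.

Definition is_edge_clique_cover (C : {set {set T}}) : bool :=
  [forall K in C, is_clique K] &&
  [forall f in edges, [exists K in C, f \subset K]].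

(* theta_e(G): minimum size of an edge clique cover (the set of edges is
   itself a cover, so #|edges| is a valid default for the min). *)
Definition theta_e : nat :=
  \big[minn/#|edges|]_(C : {set {set T}} | is_edge_clique_cover C) #|C|.

End Graph.

(* Main.v *)
Require Import Defs.
From HB Require Import structures.
From mathcomp Require Import all_boot all_order all_algebra.
From mathcomp Require Import zify.
Set Implicit Arguments. Unset Strict Implicit. Unset Printing Implicit Defensive.

Section Proof.
Variables (T : finType) (e : rel T).
Hypotheses (e_sym : symmetric e) (e_irr : irreflexive e) (hK4 : K4_free e).
Hypothesis hdis : forall D1 D2 : {set {set T}}, is_diamond e D1 -> is_diamond e D2 ->
            D1 != D2 -> [disjoint D1 & D2].

Definition pairs (X : {set T}) := [set A : {set T} | A \subset X & #|A| == 2].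
Definition tri (f : {set T}) := [set X in triangles e | f \subset X].

Lemma card_pairs (X : {set T}) : #|pairs X| = 'C(#|X|, 2).
Proof. exact: cards_draws. Qed.

Lemma cliqueP (A : {set T}) : reflect (forall x y, x \in A -> y \in A -> x != y -> e x y) (is_clique e A).
Proof.
apply: (iffP forallP) => [H x y xA yA nxy | H x].
  by move: (H x); rewrite xA /= => /forallP /(_ y); rewrite yA nxy.
by apply/implyP => xA; apply/forallP => y; apply/implyP => yA; apply/implyP; apply: H.
Qed.

Lemma clique_sub (A B : {set T}) : A \subset B -> is_clique e B -> is_clique e A.
Proof.
move=> sAB /cliqueP H; apply/cliqueP => x y xA yA; apply: H; exact: (subsetP sAB).
Qed.

Lemma clique_le3 (A : {set T}) : is_clique e A -> #|A| <= 3.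
Proof.
move=> cA; rewrite leqNgt; apply/negP => lt3.
have : 0 < #|[set B : {set T} | B \subset A & #|B| == 4]| by rewrite cards_draws bin_gt0.
case/card_gt0P => B; rewrite inE => /andP [sBA /eqP cB].
move/forallP: hK4 => /(_ B); rewrite cB eqxx /= => /negP; apply.
exact: clique_sub cA.
Qed.

Lemma pairs_edges (X : {set T}) : is_clique e X -> pairs X \subset edges e.
Proof.
move=> cX; apply/subsetP => B; rewrite !inE => /andP [sBX ->] /=.
exact: clique_sub cX.
Qed.

Lemma pairsI (X Y : {set T}) : pairs X :&: pairs Y = pairs (X :&: Y).
Proof.
apply/setP => B; rewrite !inE subsetI.
by case: (B \subset X); case: (B \subset Y); case: (#|B| == 2).
Qed.

Lemma pairs_cover (X : {set T}) : 1 < #|X| -> \bigcup_(B in pairs X) B = X.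
Proof.
move=> cX; apply/eqP; rewrite eqEsubset; apply/andP; split.
  by apply/bigcupsP => B; rewrite inE => /andP [].
apply/subsetP => x xX.
have : 0 < #|X :\ x| by move: cX; rewrite (cardsD1 x) xX.
case/card_gt0P => y; rewrite !inE => /andP [nyx yX].
apply/bigcupP; exists [set x; y]; last by rewrite !inE eqxx.
have nxy : x != y by rewrite eq_sym.
by rewrite inE cards2 nxy subUset !sub1set xX yX.
Qed.

Lemma tri_clique (X : {set T}) : X \in triangles e -> is_clique e X.
Proof. by rewrite inE => /andP []. Qed.
Lemma tri_card (X : {set T}) : X \in triangles e -> #|X| = 3.
Proof. by rewrite inE => /andP [/eqP]. Qed.

Lemma inter_le2 (X Y : {set T}) : #|X| = 3 -> #|Y| = 3 -> X != Y -> #|X :&: Y| <= 2.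
Proof.
move=> cX cY nXY; rewrite leqNgt; apply/negP => H.
have HX : X :&: Y = X.
  apply/eqP; rewrite eqEcard subsetIl cX; rewrite -ltnS in H; by [].
have HY : X :&: Y = Y.
  apply/eqP; rewrite eqEcard subsetIr cY; by [].
by move/eqP: nXY; apply; rewrite -HX HY.
Qed.

Lemma binle1 k : k <= 2 -> 'C(k, 2) <= 1.
Proof. by case: k => [|[|[|]]]. Qed.

Lemma diamond_of (X Y : {set T}) : X \in triangles e -> Y \in triangles e -> X != Y ->
  #|X :&: Y| = 2 -> is_diamond e (pairs X :|: pairs Y).
Proof.
move=> tX tY nXY cXY; apply/and3P; split.
- by rewrite subUset !pairs_edges // tri_clique.
- by rewrite (cardsU (pairs X)) pairsI !card_pairs cXY (tri_card tX) (tri_card tY).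
- have -> : \bigcup_(f in pairs X :|: pairs Y) f = X :|: Y.
    by rewrite bigcup_setU !pairs_cover ?(tri_card tX) ?(tri_card tY).
  by rewrite (cardsU X) cXY (tri_card tX) (tri_card tY).
Qed.

Lemma unique_nb (X Y Z : {set T}) : X \in triangles e -> Y \in triangles e -> Z \in triangles e ->
  X != Y -> X != Z -> #|X :&: Y| = 2 -> #|X :&: Z| = 2 -> Y = Z.
Proof.
move=> tX tY tZ nXY nXZ cXY cXZ; apply/eqP; apply/negPn/negP => nYZ.
have dY := diamond_of tX tY nXY cXY.
have dZ := diamond_of tX tZ nXZ cXZ.
have neq : pairs X :|: pairs Y != pairs X :|: pairs Z.
  apply/negP => /eqP EQ.
  have sub : pairs Z \subset pairs X :|: pairs Y by rewrite EQ subsetUr.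
  have : #|pairs Z| <= #|pairs (Z :&: X)| + #|pairs (Z :&: Y)|.
    rewrite -!pairsI; apply: leq_trans (leq_card_setU _ _).
    by rewrite -setIUr; apply: subset_leq_card; rewrite subsetI subxx sub.
  rewrite !card_pairs (tri_card tZ) setIC cXZ.
  have : 'C(#|Z :&: Y|, 2) <= 1.
    apply: binle1; apply: inter_le2; rewrite ?tri_card //.
    by rewrite eq_sym.
  by move=> H1 H2; have := leq_trans H2 (leq_add (leqnn _) H1).
move: (hdis dY dZ neq) => /disjoint_setI0 /setP H.
have : X :&: Y \in pairs X by rewrite inE subsetIl cXY.
move=> H0; move: (H (X :&: Y)); rewrite !inE in H0 *.
by rewrite H0.
Qed.


Lemma edge_card (f : {set T}) : f \in edges e -> #|f| = 2.
Proof. by rewrite inE => /andP [/eqP]. Qed.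

Lemma triP (f X : {set T}) : reflect (X \in triangles e /\ f \subset X) (X \in tri f).
Proof. by apply: (iffP idP); rewrite [X \in tri f]in_set =>/andP. Qed.

Lemma tri_tri (f X : {set T}) : X \in tri f -> X \in triangles e.
Proof. by case/triP. Qed.
Lemma tri_inter (f X Y : {set T}) : f \in edges e -> X \in tri f -> Y \in tri f -> X != Y ->
  X :&: Y = f.
Proof.
move=> ef /triP [tX fX] /triP [tY fY] nXY.
apply/eqP; rewrite eq_sym eqEcard subsetI fX fY /= (edge_card ef).
by apply: inter_le2; rewrite ?tri_card.
Qed.

Lemma tri_le2 (f : {set T}) : f \in edges e -> #|tri f| <= 2.
Proof.
move=> ef; case: (set_0Vmem (tri f)) => [-> | [X Xf]]; first by rewrite cards0.
rewrite (cardsD1 X) Xf add1n ltnS; apply/card_le1_eqP => Y Z.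
rewrite !in_setD1 => /andP [nYX Yf] /andP [nZX Zf].
have tX := tri_tri Xf.
have tY := tri_tri Yf.
have tZ := tri_tri Zf.
symmetry; apply: (unique_nb tX tY tZ); rewrite 1?eq_sym //.
  by rewrite (tri_inter ef Xf Yf) ?(edge_card ef) // eq_sym.
by rewrite (tri_inter ef Xf Zf) ?(edge_card ef) // eq_sym.
Qed.

Lemma tri1 (f X : {set T}) : X \in tri f -> (forall Z, Z \in tri f -> Z = X) -> tri f = [set X].
Proof.
move=> Xf H; apply/setP => Z; rewrite in_set1; apply/idP/eqP => [/H // | ->]; exact: Xf.
Qed.

Lemma priv_edge (X : {set T}) : X \in triangles e ->
  exists f, f \in pairs X /\ tri f = [set X].
Proof.
move=> tX.
have pe : forall f, f \in pairs X -> f \in edges e.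
  by move=> f; apply/subsetP; apply: pairs_edges; apply: tri_clique.
have fX : forall f, f \in pairs X -> X \in tri f.
  by move=> f pf; apply/triP; split => //; move: pf; rewrite inE => /andP [].
case: (boolP [exists Y in triangles e, (Y != X) && (#|X :&: Y| == 2)]).
  case/exists_inP => Y tY /andP [nYX /eqP cXY].
  have : 0 < #|pairs X :\: pairs (X :&: Y)|.
    by rewrite cardsD pairsI setIA setIid !card_pairs (tri_card tX) cXY.
  case/card_gt0P => f; rewrite inE => /andP [nf pf].
  exists f; split => //; apply: tri1; first exact: fX.
  move=> Z Zf; apply/eqP; apply/negPn/negP => nZX.
  have tZ := tri_tri Zf.
  have nXZ : X != Z by rewrite eq_sym.
  have IXZ := tri_inter (pe f pf) (fX f pf) Zf nXZ.
  have cXZ : #|X :&: Z| = 2 by rewrite IXZ (edge_card (pe f pf)).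
  have nXY : X != Y by rewrite eq_sym.
  have YZ := unique_nb tX tY tZ nXY nXZ cXY cXZ.
  move/negP: nf; apply; rewrite YZ IXZ inE subxx /=.
  by rewrite (edge_card (pe f pf)).
move/exists_inPn => H.
have : 0 < #|pairs X| by rewrite card_pairs (tri_card tX).
case/card_gt0P => f pf; exists f; split => //; apply: tri1; first exact: fX.
move=> Z Zf; apply/eqP; apply/negPn/negP => nZX.
have tZ := tri_tri Zf.
move: (H Z tZ); rewrite nZX /=.
by rewrite (tri_inter (pe f pf) (fX f pf) Zf) 1?eq_sym // (edge_card (pe f pf)).
Qed.


Definition E2 := [set f in edges e | #|tri f| == 2].
Definition phi (f : {set T}) := \bigcup_(X in tri f) pairs X.

Lemma E2P (f : {set T}) : f \in E2 -> f \in edges e /\ #|tri f| = 2.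
Proof. by rewrite inE => /andP [ef /eqP]. Qed.

Lemma tri_other (f X : {set T}) : f \in E2 -> X \in tri f -> exists Y, Y \in tri f /\ Y != X.
Proof.
case/E2P => ef cf Xf.
have : 0 < #|tri f :\ X| by move: cf; rewrite (cardsD1 X) Xf add1n => [[->]].
by case/card_gt0P => Y; rewrite in_setD1 => /andP [nYX Yf]; exists Y.
Qed.

Lemma phi_pair (f X Y : {set T}) : tri f = [set X; Y] -> phi f = pairs X :|: pairs Y.
Proof. by move=> tf; rewrite /phi tf bigcup_setU !big_set1. Qed.

Lemma phi_diamond (f : {set T}) : f \in E2 -> is_diamond e (phi f).
Proof.
move=> fE; have [ef cf] := E2P fE.
move/eqP: cf => /cards2P [X [Y [nXY tf]]].
have Xf : X \in tri f by rewrite tf !inE eqxx.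
have Yf : Y \in tri f by rewrite tf !inE eqxx orbT.
rewrite (phi_pair tf); apply: diamond_of; rewrite ?(tri_tri Xf) ?(tri_tri Yf) //.
by rewrite (tri_inter ef Xf Yf nXY) (edge_card ef).
Qed.

Lemma phi_uniq (f g : {set T}) : f \in E2 -> g \in E2 -> g \in phi f -> g = f.
Proof.
move=> fE gE /bigcupP [X Xf gX].
have [ef _] := E2P fE; have [eg _] := E2P gE.
have tX := tri_tri Xf.
have Xg : X \in tri g.
  by apply/triP; split => //; move: gX; rewrite inE => /andP [].
have [Y [Yf nYX]] := tri_other fE Xf.
have [Z [Zg nZX]] := tri_other gE Xg.
have nXY : X != Y by rewrite eq_sym.
have nXZ : X != Z by rewrite eq_sym.
have IXY := tri_inter ef Xf Yf nXY.
have IXZ := tri_inter eg Xg Zg nXZ.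
have YZ : Y = Z.
  apply: (unique_nb tX (tri_tri Yf) (tri_tri Zg) nXY nXZ).
    by rewrite IXY (edge_card ef).
  by rewrite IXZ (edge_card eg).
by rewrite -IXZ -YZ IXY.
Qed.

Lemma phi_inj : {in E2 &, injective phi}.
Proof.
move=> f g fE gE H.
have [Y [Yg _]] : exists Y, Y \in tri g /\ true.
  have [eg cg] := E2P gE.
  have : 0 < #|tri g| by rewrite cg.
  by case/card_gt0P => Y Yg; exists Y.
have gphi : g \in phi g.
  apply/bigcupP; exists Y => //; rewrite inE.
  case/triP: Yg => _ ->; by case/E2P: gE => /edge_card -> _.
by rewrite (phi_uniq fE gE) // H.
Qed.


Lemma phi_surj (D : {set {set T}}) : is_diamond e D -> exists2 f, f \in E2 & D = phi f.
Proof.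
case/and3P => sD /eqP cD /eqP cV.
set V := \bigcup_(B in D) B in cV.
have DV : D \subset pairs V.
  apply/subsetP => B BD; rewrite inE (bigcup_sup _ BD) /=.
  by rewrite (edge_card (subsetP sD _ BD)).
have c1 : #|pairs V :\: D| = 1.
  by rewrite cardsD (setIidPr DV) card_pairs cV cD.
have [h hin] : exists h, h \in pairs V :\: D.
  by apply/card_gt0P; rewrite c1.
have hD : forall B, B \in pairs V -> B != h -> B \in D.
  move=> B BV nBh; apply/negPn/negP => nBD.
  have : [set h] == pairs V :\: D by rewrite eqEcard sub1set hin cards1 c1.
  move/eqP/setP => /(_ B); rewrite in_set1 (negbTE nBh) inE nBD BV => //.
have [hV ch] : h \subset V /\ #|h| == 2.
  by move: hin; rewrite !inE => /andP [_ /andP []].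
have [h1 [h2 [nh12 hdef]]] := cards2P _ ch.
have Ta : forall a, a \in h -> [/\ pairs (V :\ a) \subset D, V :\ a \in triangles e
                                  & V :\: h \subset V :\ a].
  move=> a ah.
  have aV : a \in V by apply: (subsetP hV).
  have pD : pairs (V :\ a) \subset D.
    apply/subsetP => B; rewrite inE => /andP [BVa cB]; apply: hD.
      by rewrite inE cB (subset_trans BVa (subsetDl _ _)).
    apply/negP => /eqP Bh; move/subsetP: BVa => /(_ a).
    by rewrite Bh ah in_setD1 eqxx => /(_ isT).
  split => //.
    rewrite inE; apply/andP; split.
      by move: cV; rewrite (cardsD1 a) aV add1n => [[->]].
    apply/cliqueP => x y xV yV nxy.
    have : [set x; y] \in edges e.
      apply: (subsetP sD); apply: (subsetP pD).
      by rewrite inE cards2 nxy subUset !sub1set xV yV.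
    rewrite inE => /andP [_ /cliqueP]; apply; by rewrite ?inE ?eqxx ?orbT.
  by apply: setDS; rewrite sub1set.
have h1h : h1 \in h by rewrite hdef !inE eqxx.
have h2h : h2 \in h by rewrite hdef !inE eqxx orbT.
have [pD1 t1 s1] := Ta h1 h1h.
have [pD2 t2 s2] := Ta h2 h2h.
set f := V :\: h.
have ef : f \in edges e.
  rewrite inE; apply/andP; split.
    by rewrite cardsD (setIidPr hV) cV (eqP ch).
  exact: clique_sub s1 (tri_clique t1).
have f1 : V :\ h1 \in tri f by apply/triP.
have f2 : V :\ h2 \in tri f by apply/triP.
have n12 : V :\ h1 != V :\ h2.
  apply/negP => /eqP /setP /(_ h2).
  rewrite !in_setD1 eqxx eq_sym nh12 /= => /negbT/negP; apply.
  exact: (subsetP hV).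
have sub2 : [set V :\ h1; V :\ h2] \subset tri f.
  by rewrite subUset !sub1set f1 f2.
have tf : tri f = [set V :\ h1; V :\ h2].
  apply/eqP; rewrite eq_sym eqEcard sub2 cards2 n12.
  exact: tri_le2.
have fE : f \in E2.
  by rewrite inE ef tf cards2 n12.
exists f => //.
apply/eqP; rewrite eq_sym eqEcard.
rewrite (phi_pair tf) subUset pD1 pD2 /= cD.
by case/and3P: (phi_diamond fE) => _ /eqP; rewrite (phi_pair tf) => ->.
Qed.

Lemma d_E2 : d_num e = #|E2|.
Proof.
rewrite /d_num -(card_in_imset phi_inj); apply: eq_card => D.
apply/idP/idP.
  by rewrite inE => /phi_surj [f fE ->]; apply/imsetP; exists f.
by case/imsetP => f fE ->; rewrite inE; apply: phi_diamond.
Qed.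


Lemma sum_ind (A : {set {set T}}) (P : pred {set T}) :
  \sum_(x in A) (P x : nat) = #|[set x in A | P x]|.
Proof.
rewrite -sum1_card big_mkcond [RHS]big_mkcond /=; apply: eq_bigr => x _.
by rewrite inE; case: (x \in A); case: (P x).
Qed.

Lemma count3 : \sum_(f in edges e) #|tri f| = 3 * t_num e.
Proof.
transitivity (\sum_(f in edges e) \sum_(X in triangles e) (f \subset X : nat)).
  by apply: eq_bigr => f _; rewrite sum_ind.
rewrite exchange_big /=.
transitivity (\sum_(X in triangles e) 3).
  apply: eq_bigr => X tX; rewrite sum_ind.
  have -> : [set f in edges e | f \subset X] = pairs X.
    apply/setP => f; rewrite !inE; apply/idP/idP.
      by case/andP => /andP [-> _] ->.
    case/andP => fX cf; rewrite fX cf /= andbT.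
    exact: clique_sub fX (tri_clique tX).
  by rewrite card_pairs (tri_card tX).
by rewrite sum_nat_const mulnC.
Qed.

Definition E0 := [set f in edges e | tri f == set0].
Definition E1 := [set f in edges e | 0 < #|tri f|].

Lemma count_split : #|E1| + #|E2| = 3 * t_num e.
Proof.
rewrite -count3 /E1 /E2 -!sum_ind -big_split /=; apply: eq_bigr => f ef.
have := tri_le2 ef; case: #|tri f| => [|[|[|]]] //.
Qed.

Lemma count_edges : #|edges e| = #|E0| + #|E1|.
Proof.
rewrite /E0 /E1.
have -> : [set f in edges e | tri f == set0] = [set f in edges e | #|tri f| == 0].
  by apply/setP => f; rewrite !inE cards_eq0.
rewrite -!sum_ind -big_split /= -sum1_card; apply: eq_bigr => f _.
by case: #|tri f|.
Qed.


Lemma bigmin_le (I : eqType) (r : seq I) (P : pred I) (F : I -> nat) x j :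
  j \in r -> P j -> \big[minn/x]_(i <- r | P i) F i <= F j.
Proof.
elim: r => [//|a r IH]; rewrite inE big_cons => /orP [/eqP -> Pj | jr Pj].
  by rewrite Pj geq_minl.
case: (P a); last exact: IH.
by apply: leq_trans (geq_minr _ _) _; apply: IH.
Qed.

Lemma theta_le (C : {set {set T}}) : is_edge_clique_cover e C -> theta_e e <= #|C|.
Proof. by move=> HC; rewrite /theta_e; apply: bigmin_le => //; rewrite mem_index_enum. Qed.

Lemma E0P (f : {set T}) : f \in E0 -> f \in edges e /\ tri f = set0.
Proof. by rewrite inE => /andP [ef /eqP]. Qed.

Lemma edge_clique (f : {set T}) : f \in edges e -> is_clique e f.
Proof. by rewrite inE => /andP []. Qed.

Lemma cover0 : is_edge_clique_cover e (triangles e :|: E0).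
Proof.
apply/andP; split.
  apply/forall_inP => K; rewrite in_setU => /orP [tK | /E0P [eK _]].
    exact: tri_clique.
  exact: edge_clique.
apply/forall_inP => f ef.
case: (set_0Vmem (tri f)) => [tf | [X Xf]].
  apply/exists_inP; exists f; last exact: subxx.
  by rewrite in_setU orbC inE ef tf eqxx.
apply/exists_inP; exists X; first by rewrite in_setU (tri_tri Xf).
by case/triP: Xf.
Qed.

Lemma disj0 : triangles e :&: E0 = set0.
Proof.
apply/setP => X; rewrite in_setI in_set0; apply/negP => /andP [tX /E0P [eX _]].
by move: (edge_card eX); rewrite (tri_card tX).
Qed.

Lemma upper : theta_e e <= t_num e + #|E0|.
Proof.
apply: leq_trans (theta_le cover0) _.
by rewrite cardsU disj0 cards0 subn0.
Qed.

Lemma clique_edge_sub (f K : {set T}) : f \in edges e -> is_clique e K -> f \subset K ->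
  K = f \/ K \in tri f.
Proof.
move=> ef cK fK.
have := clique_le3 cK; rewrite leq_eqVlt ltnS => /orP [/eqP c3 | le2].
  by right; apply/triP; split => //; rewrite inE c3 eqxx cK.
left; apply/eqP; rewrite eq_sym eqEcard fK (edge_card ef) //.
Qed.

Lemma lower (C : {set {set T}}) : is_edge_clique_cover e C -> t_num e + #|E0| <= #|C|.
Proof.
case/andP => /forall_inP cC /forall_inP covC.
pose cov (f : {set T}) := odflt set0 [pick K in C | f \subset K].
have covP : forall f, f \in edges e -> cov f \in C /\ f \subset cov f.
  move=> f ef; rewrite /cov; case: pickP => [K /andP [KC fK] | H] //=.
  by case/exists_inP: (covC f ef) => K KC fK; move: (H K); rewrite KC fK.
pose priv (X : {set T}) := odflt set0 [pick f in pairs X | tri f == [set X]].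
have privP : forall X, X \in triangles e -> priv X \in pairs X /\ tri (priv X) = [set X].
  move=> X tX; rewrite /priv; case: pickP => [f /andP [fX /eqP tf] | H] //=.
  have [f [fX tf]] := priv_edge tX; by move: (H f); rewrite fX tf eqxx.
have pe : forall X f, X \in triangles e -> f \in pairs X -> f \in edges e.
  by move=> X f tX; apply/subsetP; apply: pairs_edges; apply: tri_clique.
pose p (X : {set T}) := if X \in triangles e then priv X else X.
pose g X := cov (p X).
have pE : forall X, X \in triangles e :|: E0 -> p X \in edges e.
  move=> X; rewrite in_setU /p => /orP [tX | /E0P [eX _]].
    by rewrite tX; apply: (pe X) => //; case: (privP X tX).
  case: ifP => tX //; by apply: (pe X) => //; case: (privP X tX).
have gE0 : forall X, X \in E0 -> g X = X.
  move=> X XE; have [eX tX0] := E0P XE.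
  have nt : X \notin triangles e.
    apply/negP => tX; have : X \in tri X by apply/triP; split.
    by rewrite tX0 inE.
  rewrite /g /p (negbTE nt).
  have [KC fK] := covP X eX.
  case: (clique_edge_sub eX (cC _ KC) fK) => // ; by rewrite tX0 inE.
have gT : forall X, X \in triangles e -> priv X \subset g X /\ g X \subset X.
  move=> X tX; have [pX tp] := privP X tX.
  have ep := pe X _ tX pX.
  rewrite /g /p tX.
  have [KC fK] := covP _ ep.
  split => //.
  case: (clique_edge_sub ep (cC _ KC) fK) => [-> | ].
    by move: pX; rewrite inE => /andP [].
  by rewrite tp in_set1 => /eqP ->.
have ginj : {in triangles e :|: E0 &, injective g}.
  move=> X Y; rewrite !in_setU => /orP [tX | XE] /orP [tY | YE] gXY.
  - have [pX _] := gT X tX; have [_ sY] := gT Y tY.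
    have [_ tp] := privP X tX.
    have : Y \in tri (priv X).
      apply/triP; split => //; apply: subset_trans pX _; by rewrite gXY.
    by rewrite tp in_set1 => /eqP ->.
  - have [eY tY0] := E0P YE.
    have [_ sX] := gT X tX; rewrite gXY gE0 // in sX.
    have : X \in tri Y by apply/triP.
    by rewrite tY0 inE.
  - have [eX tX0] := E0P XE.
    have [_ sY] := gT Y tY; rewrite -gXY gE0 // in sY.
    have : Y \in tri X by apply/triP.
    by rewrite tX0 inE.
  - by rewrite -(gE0 X XE) -(gE0 Y YE).
have -> : t_num e + #|E0| = #|triangles e :|: E0|.
  by rewrite cardsU disj0 cards0 subn0.
rewrite -(card_in_imset ginj); apply: subset_leq_card.
apply/subsetP => K /imsetP [X XS ->].
by case: (covP _ (pE X XS)).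
Qed.

Lemma theta_val : theta_e e = t_num e + #|E0|.
Proof.
apply/eqP; rewrite eqn_leq upper /=.
rewrite /theta_e; apply: (big_ind (fun m => t_num e + #|E0| <= m)).
- apply: lower; apply/andP; split.
    by apply/forall_inP => K; apply: edge_clique.
  by apply/forall_inP => f ef; apply/exists_inP; exists f.
- by move=> x y Hx Hy; rewrite leq_min Hx Hy.
- by move=> C; apply: lower.
Qed.


Lemma final :
  Posz (theta_e e) = (Posz #|edges e| - 2 * Posz (t_num e) + Posz (d_num e))%R.
Proof.
rewrite theta_val count_edges d_E2.
have H := count_split.
lia.
Qed.

End Proof.

Theorem mainTheorem10 (T : finType) (e : rel T)
  (e_sym : symmetric e) (e_irr : irreflexive e)
  (hK4 : K4_free e)
  (hdis : forall D1 D2 : {set {set T}}, is_diamond e D1 -> is_diamond e D2 ->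
            D1 != D2 -> [disjoint D1 & D2]) :
  Posz (theta_e e) = (Posz #|edges e| - 2 * Posz (t_num e) + Posz (d_num e))%R.
Proof. by apply: final. Qed.
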